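(* Let $g\in C^{0,1}(\mathbb R)$ be monotonically increasing with Lipschitz constant $g_{\rm Lip}$, and let $\mathcal T_h$ consist of non-obtuse simplices only. Then for all $q\in Q^1_h$ and all $\phi\in S^1_h$, on every simplex $K\in\mathcal T_h$, $$g_{\rm Lip}\,\nabla\pi_h[g(q)]\cdot\nabla q\ge\|\nabla\pi_h[g(q)]\|^2\qquad\text{and}\qquad g_{\rm Lip}\,\nabla\pi_h[g(\phi)]::\nabla\phi\ge\|\nabla\pi_h[g(\phi)]\|^2 .$$
   Context: $D\subset\mathbb R^d$ ($d\in\{2,3\}$) a bounded polytope; $\mathcal T_h$ a conforming partition of $D$ into simplices, non-obtuse meaning all dihedral angles of every simplex are at most $\pi/2$. $Q^1_h$: continuous piecewise linear scalar functions on $\mathcal T_h$; $S^1_h$: continuous piecewise linear symmetric-matrix-valued functions. $\pi_h$: nodal interpolation onto continuous piecewise linears at the vertices of $\mathcal T_h$ (entrywise for matrices). For a symmetric matrix $\phi=O^TDO$ ($O$ orthogonal, $D$ diagonal), $g(\phi):=O^Tg(D)O$ with $g(D)$ diagonal with entries $g(D_{ii})$; this is applied pointwise. For matrix fields, $\nabla\phi::\nabla\psi=\sum_{i,j}\nabla\phi_{ij}\cdot\nabla\psi_{ij}$ and $\|\nabla\phi\|^2=\nabla\phi::\nabla\phi$. *)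

(* Defs.v *)
(* the statement is algebraic (affine functions on a simplex),
   stated over an arbitrary real field R (this includes the reals). *)
From HB Require Import structures.
From mathcomp Require Import all_boot all_order all_algebra.
Set Implicit Arguments. Unset Strict Implicit. Unset Printing Implicit Defensive.
Import Order.TTheory GRing.Theory Num.Theory.
Local Open Scope ring_scope.

Definition dotv (R : realFieldType) (d : nat) (u v : 'rV[R]_d) : R :=
  \sum_(i < d) u 0 i * v 0 i.

(* A simplex K in R^d is given by its d+1 vertices x : 'I_d.+1 -> 'rV_d.
   edge_mx x is the d x d matrix whose k-th row is x_{k+1} - x_0. *)
Definition edge_mx (R : realFieldType) (d : nat) (x : 'I_d.+1 -> 'rV[R]_d)
  : 'M[R]_d := \matrix_(k < d) (x (lift ord0 k) - x ord0).

Definition nondegenerate_simplex (R : realFieldType) (d : nat)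
  (x : 'I_d.+1 -> 'rV[R]_d) : Prop := edge_mx x \in unitmx.

Definition outward_normal (R : realFieldType) (d : nat)
  (x : 'I_d.+1 -> 'rV[R]_d) (i : 'I_d.+1) (n : 'rV[R]_d) : Prop :=
  (forall k l, k != i -> l != i -> dotv (x k - x l) n = 0) /\
  (forall k, k != i -> 0 < dotv (x k - x i) n).

(* Non-obtuse simplex: every dihedral angle theta_ij (between the facets
   opposite x_i and x_j, i <> j) is at most pi/2.  Since
   cos theta_ij = - n_i . n_j / (|n_i| |n_j|) for outward normals n_i, n_j,
   theta_ij <= pi/2 is exactly n_i . n_j <= 0. *)
Definition nonobtuse_simplex (R : realFieldType) (d : nat)
  (x : 'I_d.+1 -> 'rV[R]_d) : Prop :=
  forall i j, i != j -> forall ni nj,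
    outward_normal x i ni -> outward_normal x j nj -> dotv ni nj <= 0.

(* Gradient (constant on K) of the P1 function on K with nodal values U:
   the unique w with  w . (x_k - x_0) = U_k - U_0  for all vertices k. *)
Definition p1_grad (R : realFieldType) (d : nat) (x : 'I_d.+1 -> 'rV[R]_d)
  (U : 'I_d.+1 -> R) : 'rV[R]_d :=
  (invmx (edge_mx x) *m \col_(k < d) (U (lift ord0 k) - U ord0))^T.

Definition nondecreasing_fun (R : realFieldType) (g : R -> R) : Prop :=
  forall a b, a <= b -> g a <= g b.

Definition lipschitz_with (R : realFieldType) (g : R -> R) (L : R) : Prop :=
  forall a b, `|g a - g b| <= L * `|a - b|.

Definition sym_mx (R : realFieldType) (m : nat) (A : 'M[R]_m) : Prop := A^T = A.

Definition orth_mx (R : realFieldType) (m : nat) (O : 'M[R]_m) : Prop :=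
  O^T *m O = 1%:M.

(* matfun_rel g A B :  B = g(A)  in the spectral sense of the paper:
   A = O^T D O with O orthogonal, D = diag(delta), and B = O^T g(D) O
   where g(D) = diag(g(delta_1), ..., g(delta_m)). *)
Definition matfun_rel (R : realFieldType) (m : nat) (g : R -> R)
  (A B : 'M[R]_m) : Prop :=
  exists (O : 'M[R]_m) (delta : 'rV[R]_m),
    orth_mx O /\
    A = O^T *m diag_mx delta *m O /\
    B = O^T *m diag_mx (map_mx g delta) *m O.

(* Main.v *)
Require Import Defs.
From HB Require Import structures.
From mathcomp Require Import all_boot all_order all_algebra.
Import Order.TTheory GRing.Theory Num.Theory.
Local Open Scope ring_scope.

Section Aux.
Variable R : realFieldType.

Lemma dotvC d (u v : 'rV[R]_d) : dotv u v = dotv v u.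
Proof. by rewrite /dotv; apply: eq_bigr => i _; rewrite mulrC. Qed.

Lemma dotv_suml d n (f : 'I_n -> 'rV[R]_d) v :
  dotv (\sum_(k < n) f k) v = \sum_(k < n) dotv (f k) v.
Proof.
rewrite /dotv; under eq_bigr do rewrite summxE mulr_suml.
by rewrite exchange_big.
Qed.

Lemma dotv_sumr d n (f : 'I_n -> 'rV[R]_d) v :
  dotv v (\sum_(k < n) f k) = \sum_(k < n) dotv v (f k).
Proof. by rewrite dotvC dotv_suml; apply: eq_bigr => k _; rewrite dotvC. Qed.

Lemma dotvZl d a (u v : 'rV[R]_d) : dotv (a *: u) v = a * dotv u v.
Proof. by rewrite /dotv mulr_sumr; apply: eq_bigr => i _; rewrite mxE mulrA. Qed.

Lemma dotvZr d a (u v : 'rV[R]_d) : dotv v (a *: u) = a * dotv v u.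
Proof. by rewrite dotvC dotvZl dotvC. Qed.

Lemma dotvBl d (u w v : 'rV[R]_d) : dotv (u - w) v = dotv u v - dotv w v.
Proof.
rewrite /dotv -sumrB; apply: eq_bigr => i _.
by rewrite !mxE mulrBl.
Qed.

Lemma dotvNr d (u v : 'rV[R]_d) : dotv u (- v) = - dotv u v.
Proof.
rewrite /dotv -sumrN; apply: eq_bigr => i _.
by rewrite !mxE mulrN.
Qed.

Lemma dotvNl d (u v : 'rV[R]_d) : dotv (- u) v = - dotv u v.
Proof. by rewrite dotvC dotvNr dotvC. Qed.

Lemma dotv0r d (u : 'rV[R]_d) : dotv u 0 = 0.
Proof. by rewrite /dotv big1 // => i _; rewrite mxE mulr0. Qed.

Lemma sum_delta n (F : 'I_n -> R) j : \sum_(i < n) F i * (j == i)%:R = F j.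
Proof.
rewrite (bigD1 j) //= eqxx mulr1 big1 ?addr0 // => i ne.
by rewrite eq_sym (negbTE ne) mulr0.
Qed.

Variable d : nat.
Variable x : 'I_d.+1 -> 'rV[R]_d.
Hypothesis hK : nondegenerate_simplex x.

Lemma p1_gradE U j : p1_grad x U 0 j =
  \sum_(k < d) invmx (edge_mx x) j k * (U (lift ord0 k) - U ord0).
Proof. by rewrite /p1_grad !mxE; apply: eq_bigr => k _; rewrite mxE. Qed.

Lemma p1_grad_diff0 U k : dotv (x k - x ord0) (p1_grad x U) = U k - U ord0.
Proof.
case: (unliftP ord0 k) => [k'|] ->; last first.
  rewrite !subrr /dotv big1 // => j _; by rewrite mxE mul0r.
set E := edge_mx x; set c := \col_(k < d) (U (lift ord0 k) - U ord0).
have h : E *m (invmx E *m c) = c by rewrite mulmxA mulmxV // mul1mx.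
have := congr1 (fun M : 'cV[R]_d => M (k' : 'I_d) 0) h; rewrite !mxE => <-.
rewrite /dotv; apply: eq_bigr => j _.
by rewrite /E /edge_mx !mxE.
Qed.

Lemma p1_grad_diff U k l : dotv (x k - x l) (p1_grad x U) = U k - U l.
Proof.
have -> : x k - x l = (x k - x ord0) - (x l - x ord0).
  by rewrite opprB addrA subrK.
by rewrite dotvBl !p1_grad_diff0 opprB addrA subrK.
Qed.

Definition ev (i : 'I_d.+1) := p1_grad x (fun k => (k == i)%:R).

Lemma p1_grad_lin U : p1_grad x U = \sum_(i < d.+1) U i *: ev i.
Proof.
apply/rowP => j; rewrite p1_gradE summxE.
under [RHS]eq_bigr => i _ do rewrite mxE /ev p1_gradE mulr_sumr.
rewrite exchange_big; apply: eq_bigr => k _.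
under eq_bigr do rewrite mulrCA.
rewrite -mulr_sumr; congr (_ * _).
under eq_bigr do rewrite mulrBr.
by rewrite sumrB !sum_delta.
Qed.

Lemma ev_sum : \sum_(i < d.+1) ev i = 0.
Proof.
have h : p1_grad x (fun _ => 1) = 0.
  by apply/rowP => j; rewrite p1_gradE big1 ?mxE // => k _; rewrite subrr mulr0.
rewrite -[RHS]h [RHS]p1_grad_lin; by apply: eq_bigr => i _; rewrite scale1r.
Qed.

Lemma ev_normal i : outward_normal x i (- ev i).
Proof.
split.
  by move=> k l hk hl; rewrite dotvNr p1_grad_diff (negbTE hk) (negbTE hl) subrr oppr0.
by move=> k hk; rewrite dotvNr p1_grad_diff (negbTE hk) eqxx sub0r opprK ltr01.
Qed.

End Aux.
Section Aux2.
Variable R : realFieldType.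

Lemma pt_id (a vk vl uk ul : R) : -a * ((vk - vl) * (uk - ul)) =
  (a * (vl * uk) - a * (vl * ul)) - (a * (vk * uk) - a * (vk * ul)).
Proof. by rewrite mulNr mulrBl !mulrBr opprB. Qed.

Lemma quad_identity n (a : 'I_n -> 'I_n -> R) (V U : 'I_n -> R) :
  (forall k l, a k l = a l k) -> (forall k, \sum_(l < n) a k l = 0) ->
  2 * (\sum_(k < n) \sum_(l < n) a k l * (V k * U l)) =
  \sum_(k < n) \sum_(l < n) (- a k l) * ((V k - V l) * (U k - U l)).
Proof.
move=> hs hz.
under [RHS]eq_bigr => k _ do under eq_bigr => l _ do rewrite pt_id.
under [RHS]eq_bigr => k _ do rewrite sumrB !sumrB.
rewrite sumrB !sumrB.
have -> : \sum_(k < n) \sum_(l < n) a k l * (V k * U k) = 0.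
  by rewrite big1 // => k _; rewrite -mulr_suml hz mul0r.
have -> : \sum_(k < n) \sum_(l < n) a k l * (V l * U l) = 0.
  rewrite exchange_big big1 // => l _.
  by under eq_bigr do rewrite hs; rewrite -mulr_suml hz mul0r.
have -> : \sum_(k < n) \sum_(l < n) a k l * (V l * U k) =
          \sum_(k < n) \sum_(l < n) a k l * (V k * U l).
  by rewrite exchange_big; apply: eq_bigr => k _; apply: eq_bigr => l _; rewrite hs.
by rewrite subr0 sub0r opprK mulr_natl mulr2n.
Qed.

Lemma scal_ineq (g : R -> R) L (a b : R) :
  nondecreasing_fun g -> lipschitz_with g L ->
  (g a - g b) * (g a - g b) <= L * ((g a - g b) * (a - b)).
Proof.
move=> hm hl; set t := g a - g b; set s := a - b.
have hts : 0 <= t * s.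
  case: (lerP a b) => hab.
    have := hm _ _ hab; rewrite -subr_le0 => ht.
    by rewrite mulr_le0 // /s subr_le0.
  have := hm _ _ (ltW hab); rewrite -subr_ge0 => ht.
  by rewrite mulr_ge0 // /s subr_ge0 ltW.
rewrite -(ger0_norm hts) normrM.
have -> : t * t = `|t| * `|t| by rewrite -normrM ger0_norm // -expr2 sqr_ge0.
by rewrite mulrCA; apply: ler_wpM2l; [exact: normr_ge0 | exact: hl].
Qed.
End Aux2.
Arguments ev {R d} x i.
Arguments p1_grad_lin {R d x}.
Arguments ev_normal {R d x} hK i.
Arguments ev_sum {R d x}.
Arguments scal_ineq {R g L} a b.

Lemma swap4 (R : realFieldType) m n (F : 'I_m -> 'I_m -> 'I_n -> 'I_n -> R) :
  \sum_(i < m) \sum_(j < m) \sum_(k < n) \sum_(l < n) F i j k l =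
  \sum_(k < n) \sum_(l < n) \sum_(i < m) \sum_(j < m) F i j k l.
Proof.
under eq_bigr => i _ do rewrite exchange_big.
under eq_bigr => i _ do under eq_bigr => k _ do rewrite exchange_big.
rewrite exchange_big.
by under eq_bigr => k _ do rewrite exchange_big.
Qed.

Section Aux3.
Variable R : realFieldType.
Variable d : nat.
Variable x : 'I_d.+1 -> 'rV[R]_d.
Hypothesis hK : nondegenerate_simplex x.

Lemma key V U : 2 * dotv (p1_grad x V) (p1_grad x U) =
  \sum_(k < d.+1) \sum_(l < d.+1) (- dotv (ev x k) (ev x l)) * ((V k - V l) * (U k - U l)).
Proof.
rewrite -quad_identity; last first.
- by move=> k; rewrite -dotv_sumr ev_sum dotv0r.
- by move=> k l; rewrite dotvC.
congr (2 * _).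
rewrite !p1_grad_lin dotv_suml; apply: eq_bigr => k _.
rewrite dotvZl dotv_sumr mulr_sumr; apply: eq_bigr => l _.
by rewrite dotvZr mulrA mulrC.
Qed.

Lemma ev_nonpos k l : nonobtuse_simplex x -> k != l -> dotv (ev x k) (ev x l) <= 0.
Proof.
move=> hno hkl; have := hno k l hkl _ _ (ev_normal hK k) (ev_normal hK l).
by rewrite dotvNl dotvNr opprK.
Qed.

Lemma key_mat m (Phi Psi : 'I_d.+1 -> 'M[R]_m) :
  2 * (\sum_(i < m) \sum_(j < m)
     dotv (p1_grad x (fun k => Phi k i j)) (p1_grad x (fun k => Psi k i j))) =
  \sum_(k < d.+1) \sum_(l < d.+1) (- dotv (ev x k) (ev x l)) *
     (\sum_(i < m) \sum_(j < m) (Phi k i j - Phi l i j) * (Psi k i j - Psi l i j)).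
Proof.
rewrite mulr_sumr; under eq_bigr do rewrite mulr_sumr.
under eq_bigr do under eq_bigr do rewrite key.
under [RHS]eq_bigr do under eq_bigr do rewrite mulr_sumr.
under [RHS]eq_bigr do under eq_bigr do under eq_bigr do rewrite mulr_sumr.
by rewrite swap4.
Qed.

End Aux3.
Section Mat.
Variable R : realFieldType.

Lemma conj_entry m (O : 'M[R]_m) (u : 'rV[R]_m) i j :
  (O^T *m diag_mx u *m O) i j = \sum_(p < m) O p i * u 0 p * O p j.
Proof. by rewrite mxE; apply: eq_bigr => p _; rewrite mul_mx_diag !mxE. Qed.

Lemma ac6 (a b c e f h : R) : (a * b * c) * (e * f * h) = b * f * ((a * e) * (c * h)).
Proof. by rewrite mulrACA [(a * b) * _]mulrACA [a * e * (b * f)]mulrC [RHS]mulrA. Qed.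

Lemma frob_conj m (O P : 'M[R]_m) (u v : 'rV[R]_m) :
  \sum_(i < m) \sum_(j < m) (O^T *m diag_mx u *m O) i j * (P^T *m diag_mx v *m P) i j =
  \sum_(p < m) \sum_(q < m) (O *m P^T) p q ^+ 2 * (u 0 p * v 0 q).
Proof.
under eq_bigr do under eq_bigr do rewrite !conj_entry mulr_suml.
under eq_bigr do under eq_bigr do under eq_bigr do rewrite mulr_sumr.
rewrite swap4; apply: eq_bigr => p _; apply: eq_bigr => q _.
rewrite mxE expr2 mulr_suml mulrC mulr_sumr; apply: eq_bigr => i _.
rewrite mulr_sumr mulr_sumr; apply: eq_bigr => j _.
by rewrite ac6 !mxE.
Qed.



Lemma orth_r m (O : 'M[R]_m) : orth_mx O -> O *m O^T = 1%:M.
Proof. exact: mulmx1C. Qed.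

Lemma row_sum m (O P : 'M[R]_m) p : orth_mx O -> orth_mx P ->
  \sum_(q < m) (O *m P^T) p q ^+ 2 = 1.
Proof.
move=> hO hP.
have h : (O *m P^T) *m (O *m P^T)^T = 1%:M.
  by rewrite trmx_mul trmxK mulmxA -[O *m P^T *m P]mulmxA hP mulmx1 orth_r.
have := congr1 (fun M : 'M[R]_m => M p p) h; rewrite !mxE eqxx /= => h'; apply: etrans _ h'.
by apply: eq_bigr => q _; rewrite expr2 [_^T q p]mxE.
Qed.

Lemma col_sum m (O P : 'M[R]_m) q : orth_mx O -> orth_mx P ->
  \sum_(p < m) (O *m P^T) p q ^+ 2 = 1.
Proof.
move=> hO hP.
have h : (O *m P^T)^T *m (O *m P^T) = 1%:M.
  by rewrite trmx_mul trmxK -mulmxA [O^T *m (O *m _)]mulmxA hO mul1mx orth_r.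
have := congr1 (fun M : 'M[R]_m => M q q) h; rewrite !mxE eqxx /= => h'; apply: etrans _ h'.
by apply: eq_bigr => p _; rewrite expr2 [_^T q p]mxE.
Qed.

Lemma diag_sum m (O : 'M[R]_m) p (f : 'I_m -> R) : orth_mx O ->
  \sum_(q < m) (O *m O^T) p q ^+ 2 * f q = f p.
Proof.
move=> hO; rewrite orth_r //.
rewrite (bigD1 p) //= big1 ?addr0; first by rewrite !mxE eqxx /= expr1n mul1r.
by move=> q hq; rewrite !mxE eq_sym (negbTE hq) /= expr0n mul0r.
Qed.

End Mat.
Section Mat2.
Variable R : realFieldType.

Lemma exp4 (a b c e : R) : (a - b) * (c - e) = (a * c - a * e) - (b * c - b * e).
Proof. by rewrite mulrBl !mulrBr. Qed.

Lemma frob_diff m (O P : 'M[R]_m) (u1 u2 v1 v2 : 'rV[R]_m) :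
  orth_mx O -> orth_mx P ->
  \sum_(i < m) \sum_(j < m)
    ((O^T *m diag_mx u1 *m O) i j - (P^T *m diag_mx v1 *m P) i j) *
    ((O^T *m diag_mx u2 *m O) i j - (P^T *m diag_mx v2 *m P) i j) =
  \sum_(p < m) \sum_(q < m) (O *m P^T) p q ^+ 2 *
    ((u1 0 p - v1 0 q) * (u2 0 p - v2 0 q)).
Proof.
move=> hO hP.
under eq_bigr do under eq_bigr do rewrite exp4.
under eq_bigr do rewrite sumrB !sumrB.
rewrite sumrB !sumrB !frob_conj.
under [RHS]eq_bigr do under eq_bigr do rewrite exp4 mulrBr !mulrBr.
under [RHS]eq_bigr do rewrite sumrB !sumrB.
rewrite sumrB !sumrB.
congr (_ - _ - (_ - _)).
- under eq_bigr => p _ do rewrite (@diag_sum _ _ O p (fun q => u1 0 p * u2 0 q) hO).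
  by apply: eq_bigr => p _; rewrite -mulr_suml row_sum // mul1r.
- rewrite exchange_big; apply: eq_bigr => p _; apply: eq_bigr => q _.
  have hT : (O *m P^T)^T = P *m O^T by rewrite trmx_mul trmxK.
  by rewrite -hT mxE.
- under eq_bigr => p _ do rewrite (@diag_sum _ _ P p (fun q => v1 0 p * v2 0 q) hP).
  rewrite [RHS]exchange_big; apply: eq_bigr => q _.
  by rewrite -mulr_suml col_sum // mul1r.
Qed.

Lemma mat_ineq (g : R -> R) L m (A GA B GB : 'M[R]_m) :
  nondecreasing_fun g -> lipschitz_with g L ->
  matfun_rel g A GA -> matfun_rel g B GB ->
  \sum_(i < m) \sum_(j < m) (GA i j - GB i j) * (GA i j - GB i j) <=
  L * \sum_(i < m) \sum_(j < m) (GA i j - GB i j) * (A i j - B i j).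
Proof.
move=> hm hl [O [u [hO [-> ->]]]] [P [v [hP [-> ->]]]].
rewrite !frob_diff // mulr_sumr; apply: ler_sum => p _.
rewrite mulr_sumr; apply: ler_sum => q _.
rewrite [L * _]mulrCA; apply: ler_wpM2l; first exact: sqr_ge0.
by rewrite !mxE; apply: scal_ineq.
Qed.
End Mat2.
Theorem lemma5p1 (R : realFieldType) (d : nat) (hd : (d == 2%N) || (d == 3%N))
  (g : R -> R) (L : R) (hmono : nondecreasing_fun g) (hlip : lipschitz_with g L)
  (x : 'I_d.+1 -> 'rV[R]_d) (hK : nondegenerate_simplex x)
  (hno : nonobtuse_simplex x) :
  (forall q : 'I_d.+1 -> R,
     L * dotv (p1_grad x (fun k => g (q k))) (p1_grad x q)
       >= dotv (p1_grad x (fun k => g (q k))) (p1_grad x (fun k => g (q k))))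
  /\
  (forall (m : nat) (phi gphi : 'I_d.+1 -> 'M[R]_m),
     (forall k, sym_mx (phi k)) ->
     (forall k, matfun_rel g (phi k) (gphi k)) ->
     L * (\sum_(i < m) \sum_(j < m)
            dotv (p1_grad x (fun k => gphi k i j)) (p1_grad x (fun k => phi k i j)))
       >= \sum_(i < m) \sum_(j < m)
            dotv (p1_grad x (fun k => gphi k i j)) (p1_grad x (fun k => gphi k i j))).
Proof.
split.
  move=> q; rewrite -subr_ge0 -(pmulr_rge0 _ (ltr0Sn R 1)) mulrBr mulrCA.
  rewrite !key mulr_sumr -sumrB; apply: sumr_ge0 => k _.
  rewrite mulr_sumr -sumrB; apply: sumr_ge0 => l _.
  rewrite mulrCA -mulrBr.
  case: (eqVneq k l) => [->|hkl]; first by rewrite !subrr !mul0r mulr0 subrr mulr0.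
  apply: mulr_ge0; first by rewrite oppr_ge0; exact: (@ev_nonpos _ _ _ hK).
  by rewrite subr_ge0; apply: scal_ineq.
move=> m phi gphi _ hrel.
rewrite -subr_ge0 -(pmulr_rge0 _ (ltr0Sn R 1)) mulrBr mulrCA.
rewrite !key_mat mulr_sumr -sumrB; apply: sumr_ge0 => k _.
rewrite mulr_sumr -sumrB; apply: sumr_ge0 => l _.
rewrite mulrCA -mulrBr.
case: (eqVneq k l) => [->|hkl].
  have z : forall F : 'I_m -> 'I_m -> R,
      \sum_(i < m) \sum_(j < m) (gphi l i j - gphi l i j) * F i j = 0.
    by move=> F; rewrite big1 // => i _; rewrite big1 // => j _; rewrite subrr mul0r.
  by rewrite !z mulr0 subrr mulr0.
apply: mulr_ge0; first by rewrite oppr_ge0; exact: (@ev_nonpos _ _ _ hK).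
by rewrite subr_ge0; exact: (@mat_ineq _ g L m _ _ _ _ hmono hlip (hrel k) (hrel l)).
Qed.
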